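(* Let $A=[a_{ij}]$ be a real $n\times n$ matrix with zero diagonal and $f(\sigma)=\sum_{p=1}^{n-1}\sum_{q=p+1}^n a_{\sigma(p)\sigma(q)}$ its LOP objective function on $\Sigma_n$. Let $1\le k\le n$, let $i_1,\dots,i_k\in\{1,\dots,n\}$ be distinct, let $S_k=\{\sigma:\sigma(1)=i_1,\dots,\sigma(k)=i_k\}$ and $S_{k-1}=\{\sigma:\sigma(1)=i_1,\dots,\sigma(k-1)=i_{k-1}\}$, and set $\mu_k=\frac{1}{|S_k|}\sum_{\sigma\in S_k}f(\sigma)$, $\mu_{k-1}=\frac{1}{|S_{k-1}|}\sum_{\sigma\in S_{k-1}}f(\sigma)$. Then $$\mu_k-\mu_{k-1}=\frac12\sum_{j\in\{1,\dots,n\}\setminus\{i_1,\dots,i_k\}}\bigl(a_{i_kj}-a_{ji_k}\bigr).$$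
   Context: $\Sigma_n$ is the symmetric group on $\{1,\dots,n\}$; $\sigma(p)$ is the row/column index placed in position $p$; for $k=1$, $S_0=\Sigma_n$. *)

(* Defs.v *)
From HB Require Import structures.
From mathcomp Require Import all_boot all_order all_algebra all_fingroup.
Set Implicit Arguments. Unset Strict Implicit. Unset Printing Implicit Defensive.
Import Order.TTheory GRing.Theory Num.Theory.
Local Open Scope ring_scope.

(* Positions and row/column indices are 0-based ordinals 'I_n;
   sigma p is the index placed in position p. *)

Definition lop_obj (R : ringType) (n : nat) (A : 'M[R]_n) (s : 'S_n) : R :=
  \sum_(p : 'I_n) \sum_(q : 'I_n | (p < q)%N) A (s p) (s q).

Definition prefix_set (n : nat) (i : nat -> 'I_n) (m : nat) : {set 'S_n} :=
  [set s : 'S_n | [forall p : 'I_n, (p < m)%N ==> (s p == i p)]].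

Definition avg_over (R : fieldType) (n : nat) (f : 'S_n -> R) (S : {set 'S_n}) : R :=
  (\sum_(s in S) f s) / (#|S|)%:R.

(* Main.v *)
Require Import Defs.
From HB Require Import structures.
From mathcomp Require Import all_boot all_order all_algebra all_fingroup.
From mathcomp Require Import zify ring.
Import Order.TTheory GRing.Theory Num.Theory.
Set Implicit Arguments. Unset Strict Implicit.
Local Open Scope ring_scope.

Lemma prefixP (n : nat) (i : nat -> 'I_n) m (s : 'S_n) :
  reflect (forall p : 'I_n, (p < m)%N -> s p = i p) (s \in prefix_set i m).
Proof.
rewrite inE; apply: (iffP forallP) => H p.
  by move=> hp; move: (H p); rewrite hp => /eqP.
by apply/implyP => hp; rewrite H.
Qed.

Lemma R_lemma (R : ringType) (n : nat) (i : nat -> 'I_n) m (s : 'S_n) (phi : 'I_n -> R) :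
  (m <= n)%N -> s \in prefix_set i m ->
  \sum_(q : 'I_n) (if (m <= q)%N then phi (s q) else 0) =
  \sum_(j : 'I_n) (if j \notin [seq i t | t <- iota 0 m] then phi j else 0).
Proof.
move=> hmn /prefixP hs.
rewrite (reindex_inj (h := (s^-1)%g) (@perm_inj _ _)).
apply: eq_bigr => j _; rewrite permKV.
have -> : (m <= (s^-1)%g j)%N = (j \notin [seq i t | t <- iota 0 m]).
  apply/idP/idP.
    move=> hm; apply/mapP => -[t]; rewrite mem_iota add0n => /andP[_ ht] hj.
    have htn : (t < n)%N by apply: leq_trans hmn.
    have := hs (Ordinal htn) ht => /= hst.
    have : (s^-1)%g j = Ordinal htn by rewrite hj -hst permK.
    by move=> e; move: hm; rewrite e /=; lia.
  apply: contraR; rewrite -ltnNge => hlt; apply/mapP.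
  exists (val ((s^-1)%g j)); first by rewrite mem_iota add0n.
  by rewrite -hs // permKV.
by [].
Qed.

Lemma Dsplit (R : ringType) (n : nat) (A : 'M[R]_n) m (s : 'S_n) :
  (forall j, A j j = 0) ->
  \sum_(p : 'I_n) \sum_(q : 'I_n) (if ((m <= p) && (m <= q))%N then A (s p) (s q) else 0)
  = \sum_(p : 'I_n) \sum_(q : 'I_n) (if ((m <= p) && (p < q))%N then A (s p) (s q) + A (s q) (s p) else 0).
Proof.
move=> hA.
have E : forall (c : bool) (a b : R), (if c then a + b else 0) = (if c then a else 0) + (if c then b else 0).
  by move=> [] a b //; rewrite addr0.
under [RHS]eq_bigr => p _ do under eq_bigr => q _ do rewrite E.
under [RHS]eq_bigr => p _ do rewrite big_split /=.
rewrite big_split /= [X in _ = _ + X]exchange_big /=.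
rewrite -big_split; apply: eq_bigr => p _; rewrite -big_split; apply: eq_bigr => q _ /=.
case: (ltngtP p q) => h.
- rewrite andbT andbF addr0; case: (leqP m p) => hp //=.
  by have -> : (m <= q)%N by lia.
- rewrite andbT andbF add0r; case: (leqP m q) => hq //=; rewrite ?andbF //.
  by have -> : (m <= p)%N by lia.
- have e : p = q by apply: val_inj.
  by rewrite e !andbF hA addr0; case: ifP.
Qed.
Definition T1 (R : ringType) n (A : 'M[R]_n) m (s : 'S_n) : R :=
  \sum_(p : 'I_n) \sum_(q : 'I_n) (if ((p < m) && (p < q))%N then A (s p) (s q) else 0).
Definition DF (R : ringType) n (A : 'M[R]_n) m (s : 'S_n) : R :=
  \sum_(p : 'I_n) \sum_(q : 'I_n) (if ((m <= p) && (m <= q))%N then A (s p) (s q) else 0).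
Definition gg (R : fieldType) n (A : 'M[R]_n) m (s : 'S_n) : R :=
  T1 A m s + 2^-1 * DF A m s.

Lemma swap_sum (R : ringType) n (A : 'M[R]_n) (i : nat -> 'I_n) m (p q : 'I_n) :
  (m <= p)%N -> (p < q)%N ->
  \sum_(s in prefix_set i m) A (s p) (s q) = \sum_(s in prefix_set i m) A (s q) (s p).
Proof.
move=> hp hq.
rewrite (reindex_inj (h := mulg (tperm p q)) (mulgI _)).
apply: eq_big => [s|s _]; last by rewrite !permM tpermL tpermR.
apply/prefixP/prefixP => H x hx.
  have tx : tperm p q x = x by apply: tpermD; apply/eqP => e; subst x; lia.
  by rewrite -H // permM tx.
have tx : tperm p q x = x by apply: tpermD; apply/eqP => e; subst x; lia.
by rewrite permM tx H.
Qed.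

Lemma exists_prefix n (i : nat -> 'I_n) k :
  (k <= n)%N -> {in [pred t | (t < k)%N] &, injective i} ->
  forall m, (m <= k)%N -> exists s, s \in prefix_set i m.
Proof.
move=> hkn hinj; elim=> [|m IH] hm.
  by exists 1%g; apply/prefixP.
have [s /prefixP hs] := IH (ltnW hm).
have hmn : (m < n)%N by lia.
pose m0 := Ordinal hmn.
pose q := (s^-1)%g (i m).
exists (tperm m0 q * s)%g; apply/prefixP => p hp; rewrite permM.
have [e|ne] := eqVneq p m0.
  by rewrite e tpermL /q permKV.
have hpm : (p < m)%N.
  by move: ne; rewrite -val_eqE /=; lia.
rewrite tpermD ?hs //; first by rewrite eq_sym.
apply/eqP => eq; have : i m = i p by rewrite -hs // -eq /q permKV.
move/hinj; rewrite !inE => H; have := H hm (ltn_trans hpm hm); lia.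
Qed.

Lemma f_minus_g (R : numFieldType) n (A : 'M[R]_n) m (s : 'S_n) :
  (forall j, A j j = 0) ->
  lop_obj A s - gg A m s = \sum_(p : 'I_n) \sum_(q : 'I_n)
     (if ((m <= p) && (p < q))%N then 2^-1 * (A (s p) (s q) - A (s q) (s p)) else 0).
Proof.
move=> hA; rewrite /gg /DF Dsplit // /T1 /lop_obj. rewrite big_distrr /=.
under eq_bigr => p _ do rewrite big_mkcond /=.
under [X in _ - (_ + X)]eq_bigr => p _ do rewrite big_distrr /=.
rewrite -big_split -sumrB; apply: eq_bigr => p _.
rewrite -big_split -sumrB; apply: eq_bigr => q _ /=.
case: (ltnP p q) => hpq; rewrite ?andbT ?andbF; last by rewrite mulr0 addr0 subr0.
case: (ltnP p m) => hpm /=.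
  by rewrite mulr0 addr0 subrr.
have h2 : (2 : R) != 0 by rewrite pnatr_eq0.
by rewrite add0r; field.
Qed.

Lemma sum_f_g (R : numFieldType) n (A : 'M[R]_n) (i : nat -> 'I_n) m :
  (forall j, A j j = 0) ->
  \sum_(s in prefix_set i m) lop_obj A s = \sum_(s in prefix_set i m) gg A m s.
Proof.
move=> hA; apply/eqP; rewrite -subr_eq0 -sumrB.
under eq_bigr => s _ do rewrite f_minus_g //.
rewrite exchange_big /=; apply/eqP; apply: big1 => p _.
rewrite exchange_big /=; apply: big1 => q _.
case h: ((m <= p) && (p < q))%N; last by apply: big1.
move/andP: h => [hp hq].
by rewrite -big_distrr /= sumrB swap_sum // subrr mulr0.
Qed.

Definition KK (R : fieldType) n (A : 'M[R]_n) (i : nat -> 'I_n) m : R :=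
  \sum_(p : 'I_n) (if (p < m)%N then
      \sum_(q : 'I_n) (if ((q < m) && (p < q))%N then A (i p) (i q) else 0)
    + \sum_(j : 'I_n) (if j \notin [seq i t | t <- iota 0 m] then A (i p) j else 0) else 0)
  + 2^-1 * \sum_(j : 'I_n) (if j \notin [seq i t | t <- iota 0 m] then
       \sum_(l : 'I_n) (if l \notin [seq i t | t <- iota 0 m] then A j l else 0) else 0).

Lemma gK (R : fieldType) n (A : 'M[R]_n) (i : nat -> 'I_n) m (s : 'S_n) :
  (m <= n)%N -> s \in prefix_set i m -> gg A m s = KK A i m.
Proof.
move=> hmn hs; have hs' := hs; move/prefixP: hs' => hs'.
rewrite /gg /KK /T1 /DF; congr (_ + 2^-1 * _).
  apply: eq_bigr => p _; case: (ltnP p m) => hpm /=; last by apply: big1 => q _.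
  rewrite -(R_lemma (fun x => A (i p) x) hmn hs) -big_split /=.
  apply: eq_bigr => q _; rewrite hs' //.
  case: (ltnP q m) => hqm /=.
    by rewrite hs' // addr0.
  have -> : (p < q)%N by lia.
  by rewrite add0r.
rewrite -(R_lemma (fun x => \sum_(l : 'I_n) (if l \notin [seq i t | t <- iota 0 m] then A x l else 0)) hmn hs).
apply: eq_bigr => p _; case: (leqP m p) => hp /=; last by apply: big1.
by rewrite -(R_lemma (fun x => A (s p) x) hmn hs).
Qed.

Lemma avgK (R : numFieldType) n (A : 'M[R]_n) (i : nat -> 'I_n) m (s : 'S_n) :
  (forall j, A j j = 0) ->
  (m <= n)%N -> s \in prefix_set i m -> avg_over (lop_obj A) (prefix_set i m) = gg A m s.
Proof.
move=> hA hmn hs; rewrite /avg_over sum_f_g //.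
rewrite (eq_bigr (fun _ => gg A m s)); last by move=> t ht; rewrite (@gK _ _ A i m t hmn ht) (@gK _ _ A i m s hmn hs).
rewrite sumr_const -[X in X / _]mulr_natr mulfK //.
rewrite pnatr_eq0 -lt0n; apply/card_gt0P; by exists s.
Qed.

Lemma sum_single (R : nmodType) n (m0 : 'I_n) (F : 'I_n -> R) :
  (forall p, p != m0 -> F p = 0) -> \sum_(p : 'I_n) F p = F m0.
Proof. by move=> HF; rewrite (bigD1 m0) //= big1 ?addr0. Qed.

Lemma gdiff (R : numFieldType) n (A : 'M[R]_n) m (m0 : 'I_n) (s : 'S_n) :
  val m0 = m -> (forall j, A j j = 0) ->
  gg A m.+1 s - gg A m s =
  2^-1 * \sum_(q : 'I_n) (if (m.+1 <= q)%N then A (s m0) (s q) - A (s q) (s m0) else 0).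
Proof.
move=> hm0 hA; rewrite /gg /DF !Dsplit // /T1.
set h := (2^-1 : R).
have E : forall a b c d : R, (a + h * b) - (c + h * d) = (a - c) + h * (b - d).
  by move=> a b c d; ring.
rewrite E -!sumrB.
under eq_bigr => p _ do rewrite -sumrB.
under [X in _ + h * X]eq_bigr => p _ do rewrite -sumrB.
rewrite big_distrr /=.
under [X in _ + X]eq_bigr => p _ do rewrite big_distrr /=.
rewrite -big_split /=.
under eq_bigr => p _ do rewrite -big_split /=.
rewrite [LHS](@sum_single _ _ m0); last first.
  move=> p hp; apply: big1 => q _.
  have hpm : (val p != m) by rewrite -hm0 val_eqE.
  have -> : (p < m.+1)%N = (p < m)%N by rewrite ltnS leq_eqVlt (negbTE hpm).
  have -> : (m.+1 <= p)%N = (m <= p)%N by rewrite ltn_neqAle eq_sym hpm.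
  by rewrite !subrr mulr0 addr0.
rewrite big_distrr /=; apply: eq_bigr => q _; rewrite hm0 ltnn leqnn ?ltnSn /=.
case: (ltnP m q) => hq /=; last by rewrite andbF /=; ring.
have h2 : (2 : R) != 0 by rewrite pnatr_eq0.
by rewrite leqnn /= /h; field.
Qed.

Unset Implicit Arguments. Set Strict Implicit.

Theorem proposition6 (R : realFieldType) (n : nat) (A : 'M[R]_n)
  (k : nat) (i : nat -> 'I_n) :
  (forall j : 'I_n, A j j = 0) ->
  (0 < k)%N -> (k <= n)%N ->
  {in [pred t | (t < k)%N] &, injective i} ->
  avg_over (lop_obj A) (prefix_set i k) - avg_over (lop_obj A) (prefix_set i k.-1)
  = 2^-1 * \sum_(j : 'I_n | j \notin [seq i t | t <- iota 0 k])
             (A (i k.-1) j - A j (i k.-1)).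
Proof.
move=> hA hk hkn hinj.
have [s hs] := exists_prefix hkn hinj (leqnn k).
have hs' : s \in prefix_set i k.-1.
  by move/prefixP: hs => H; apply/prefixP => p hp; apply: H; lia.
rewrite (avgK hA hkn hs) (avgK hA (leq_trans (leq_pred k) hkn) hs').
case: k hk hkn hinj hs hs' => // m _ hkn hinj hs hs' /=.
have hmn : (m < n)%N by [].
rewrite (@gdiff _ _ A m (Ordinal hmn) s erefl hA).
congr (_ * _); rewrite [RHS]big_mkcond.
have -> : s (Ordinal hmn) = i m by move/prefixP: hs => H; rewrite H.
exact: (R_lemma (fun x => A (i m) x - A x (i m)) hkn hs).
Qed.
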